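(* Let $G$ be a connected graph in $\mathcal{C}$ and $C$ an induced $C_5$ in $G$. Then there is no edge between $R$ and $Y$.
   Context: $\mathcal{C}=\mathrm{Free}(\text{claw}, 4K_1, \text{5-wheel}, C_5\text{-twin}, P_5\text{-twin}, K_5-e)$, where $\mathrm{Free}(L)$ is the class of graphs with no induced subgraph isomorphic to a member of $L$; the claw is $K_{1,3}$; $4K_1$ is the edgeless graph on 4 vertices; the 5-wheel is $C_5$ plus a vertex adjacent to all five cycle vertices; the $C_5$-twin is $C_5$ plus a new vertex adjacent to one cycle vertex $v$ and both cycle-neighbours of $v$; the $P_5$-twin is a path $p_1p_2p_3p_4p_5$ plus a new vertex adjacent to exactly $p_2,p_3,p_4$; $K_5-e$ is $K_5$ minus one edge. Given an induced cycle $C$ of length 5 with vertices $0,\dots,4$ in cyclic order (indices taken mod 5): $R$ is the set of vertices outside $C$ with no neighbour in $C$; $X_j$ is the set of vertices outside $C$ whose neighbourhood in $C$ is exactly $\{j,j+1\}$; $Y_j$ is the set of vertices outside $C$ whose neighbourhood in $C$ is exactly $\{j,j+1,j+2,j+3\}$; $X=\bigcup_j X_j$, $Y=\bigcup_j Y_j$. *)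

(* Defs.v *)
From mathcomp Require Import all_boot.
Set Implicit Arguments. Unset Strict Implicit. Unset Printing Implicit Defensive.

Definition cyc5 (i j : nat) : bool :=
  (j == (i + 1) %% 5) || (i == (j + 1) %% 5).

Definition induced_copy (T : finType) (e : rel T) (n : nat) (h : rel 'I_n) : Prop :=
  exists f : 'I_n -> T, injective f /\ forall i j, e (f i) (f j) = h i j.

Definition claw_rel : rel 'I_4 := fun i j =>
  (i != j) && ((val i == 0) || (val j == 0)).
Definition fourK1_rel : rel 'I_4 := fun _ _ => false.
Definition wheel5_rel : rel 'I_6 := fun i j =>
  if (val i < 5) && (val j < 5) then cyc5 i j
  else (val i == 5) (+) (val j == 5).
(* C5-twin: cycle 0..4, vertex 5 adjacent to 0 and its cycle-neighbours 4, 1 *)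
Definition C5twin_rel : rel 'I_6 := fun i j =>
  if (val i < 5) && (val j < 5) then cyc5 i j
  else if val i == 5 then val j \in [:: 4; 0; 1]
  else val i \in [:: 4; 0; 1].
Definition P5twin_rel : rel 'I_6 := fun i j =>
  if (val i < 5) && (val j < 5) then (val j == (val i).+1) || (val i == (val j).+1)
  else if val i == 5 then val j \in [:: 1; 2; 3]
  else val i \in [:: 1; 2; 3].
Definition K5e_rel : rel 'I_5 := fun i j =>
  (i != j) && ~~ ([&& val i <= 1 & val j <= 1]).

Definition in_class (T : finType) (e : rel T) : Prop :=
  ~ induced_copy e claw_rel /\ ~ induced_copy e fourK1_rel /\
  ~ induced_copy e wheel5_rel /\ ~ induced_copy e C5twin_rel /\
  ~ induced_copy e P5twin_rel /\ ~ induced_copy e K5e_rel.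

Definition simple_graph (T : finType) (e : rel T) : Prop :=
  symmetric e /\ irreflexive e.

Definition connected_graph (T : finType) (e : rel T) : Prop :=
  forall x y : T, connect e x y.

Definition induced_C5 (T : finType) (e : rel T) (c : 'I_5 -> T) : Prop :=
  injective c /\ forall i j : 'I_5, e (c i) (c j) = cyc5 i j.

Definition nbC (T : finType) (e : rel T) (c : 'I_5 -> T) (v : T) : {set 'I_5} :=
  [set i | e v (c i)].

Definition outside (T : finType) (c : 'I_5 -> T) (v : T) : bool := v \notin codom c.

Definition inR (T : finType) (e : rel T) (c : 'I_5 -> T) (v : T) : bool :=
  outside c v && (nbC e c v == set0).

Definition inYj (T : finType) (e : rel T) (c : 'I_5 -> T) (j : 'I_5) (v : T) : bool :=
  outside c v &&
  (nbC e c v == [set i : 'I_5 | [|| val i == val j, val i == (val j + 1) %% 5,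
                                    val i == (val j + 2) %% 5 | val i == (val j + 3) %% 5]]).

Definition inY (T : finType) (e : rel T) (c : 'I_5 -> T) (v : T) : bool :=
  [exists j : 'I_5, inYj e c j v].

(* Main.v *)
Require Import Defs.
From mathcomp Require Import all_boot.

Lemma key (T : finType) (e : rel T) (c : 'I_5 -> T) (y r : T) (a b : 'I_5) :
  simple_graph e -> in_class e -> induced_C5 e c ->
  e y (c a) -> e y (c b) -> cyc5 a b = false -> a != b ->
  (forall i, e r (c i) = false) -> outside c y -> outside c r -> e r y -> False.
Proof.
move=> [sym irr] [noclaw _] [injc ec] ya yb nab ab rc oy orr ry.
have yr : e y r by rewrite sym.
have ba : cyc5 b a = false by rewrite -ec sym ec.
have ca : forall i, c i != y.
  move=> i; apply/eqP=> E; move: oy; rewrite /outside -E codom_f //.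
have cr : forall i, c i != r.
  move=> i; apply/eqP=> E; move: orr; rewrite /outside -E codom_f //.
have ry' : r != y by apply/eqP=> E; move: ry; rewrite E irr.
have cab : c a != c b by apply/eqP=> /injc /eqP; rewrite (negbTE ab).
have cry : forall i, e (c i) r = false by move=> i; rewrite sym.
apply: noclaw.
exists (fun i : 'I_4 => nth y [:: y; r; c a; c b] i); split.
  move=> [[|[|[|[|?]]]] ?] [[|[|[|[|?]]]] ?] //=; try (by move=> _; apply: val_inj);
  move=> E; exfalso; move: (ca a) (ca b) (cr a) (cr b) ry' cab; rewrite E ?eqxx /= => //;
  by do ![case| move=> _].
move=> [[|[|[|[|?]]]] ?] [[|[|[|[|?]]]] ?] //=;
  rewrite /claw_rel /= ?irr ?ry ?yr ?ya ?yb ?rc ?cry ?ec ?nab ?ba //;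
  rewrite sym ?ya ?yb //.
Qed.

Theorem claim9 (T : finType) (e : rel T) (c : 'I_5 -> T) :
  simple_graph e -> connected_graph e -> in_class e -> induced_C5 e c ->
  forall r y : T, inR e c r -> inY e c y -> ~~ e r y.
Proof.
move=> sg _ cl ic r y /andP [orr /eqP Rn] /existsP [j /andP [oy /eqP Yn]].
apply/negP=> ry.
have rc : forall i, e r (c i) = false.
  by move=> i; apply/negbTE; rewrite -(in_set (fun i => e r (c i))) -/(nbC e c r) Rn in_set0.
have yc : forall i, e y (c i) = (i \in nbC e c y) by move=> i; rewrite inE.
case: j Yn => [[|[|[|[|[|?]]]]] ?] //= Yn.
- apply: (@key T e c y r (inord 0) (inord 2) sg cl ic) => //;
  [rewrite yc Yn inE /= inordK // | rewrite yc Yn inE /= inordK // | by rewrite /cyc5 !inordK |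
   by apply/eqP=> /(congr1 val); rewrite /= !inordK].
- apply: (@key T e c y r (inord 1) (inord 3) sg cl ic) => //;
  [rewrite yc Yn inE /= inordK // | rewrite yc Yn inE /= inordK // | by rewrite /cyc5 !inordK |
   by apply/eqP=> /(congr1 val); rewrite /= !inordK].
- apply: (@key T e c y r (inord 2) (inord 4) sg cl ic) => //;
  [rewrite yc Yn inE /= inordK // | rewrite yc Yn inE /= inordK // | by rewrite /cyc5 !inordK |
   by apply/eqP=> /(congr1 val); rewrite /= !inordK].
- apply: (@key T e c y r (inord 3) (inord 0) sg cl ic) => //;
  [rewrite yc Yn inE /= inordK // | rewrite yc Yn inE /= inordK // | by rewrite /cyc5 !inordK |
   by apply/eqP=> /(congr1 val); rewrite /= !inordK].
- apply: (@key T e c y r (inord 4) (inord 1) sg cl ic) => //;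
  [rewrite yc Yn inE /= inordK // | rewrite yc Yn inE /= inordK // | by rewrite /cyc5 !inordK |
   by apply/eqP=> /(congr1 val); rewrite /= !inordK].
Qed.
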